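(* Let $\mathbf S=\langle S,+,0,\mathscr F\rangle$ be a semilattice with operators, and define $\eta$ on $\operatorname{Con}\mathbf S$ by $\eta(\theta)=\operatorname{con}_{\mathrm{SL}}(0/\theta)$, the semilattice congruence generated by collapsing the $0$-class of $\theta$ to $0$. Then $\eta$ satisfies, for all $x,y,z\in L=\operatorname{Con}\mathbf S$: (I1) $\eta(x)\le x$; (I2) $x\ge y$ implies $\eta(x)\ge\eta(y)$; (I3) $\eta^2(x)=\eta(x)$; (I4) $\eta(1)=1$; (I5) if $\eta(x)=u$ for all $x\in X\subseteq L$ then $\eta(\bigvee X)=u$; (I6) $\eta(x)\vee(y\wedge z)=(\eta(x)\vee y)\wedge(\eta(x)\vee z)$; (I7) the image $\eta(L)$ is the complete join subsemilattice of $L$ generated by $\eta(L)\cap L_c$, where $L_c$ is the set of compact elements of $L$.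
   Context: A semilattice with operators is a join semilattice $(S,+)$ with least element $0$ together with a set $\mathscr F$ of unary maps preserving $+$ and $0$; congruences are equivalence relations compatible with $+$ and all $f\in\mathscr F$. $0/\theta$ denotes the $0$-class of $\theta$. Explicitly, $x\,\eta(\theta)\,y$ iff $x+i=y+i$ for some $i\in 0/\theta$ (this relation is a congruence of $\mathbf S$). *)

(* Defs.v *)
From Stdlib Require Import List.
Set Implicit Arguments.

Record SLO := {
  car :> Type;
  sjoin : car -> car -> car;
  szero : car;
  Fidx : Type;
  fop : Fidx -> car -> car;
  sjoinA : forall x y z, sjoin x (sjoin y z) = sjoin (sjoin x y) z;
  sjoinC : forall x y, sjoin x y = sjoin y x;
  sjoinI : forall x, sjoin x x = x;
  sjoin0 : forall x, sjoin szero x = x;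
  fop_join : forall f x y, fop f (sjoin x y) = sjoin (fop f x) (fop f y);
  fop_zero : forall f, fop f szero = szero
}.

Section Con.
Variable S : SLO.
Local Notation "x + y" := (sjoin S x y).
Local Notation "0" := (szero S).

Definition rel := S -> S -> Prop.

Definition is_con (t : rel) : Prop :=
  (forall x, t x x) /\
  (forall x y, t x y -> t y x) /\
  (forall x y z, t x y -> t y z -> t x z) /\
  (forall x y x' y', t x y -> t x' y' -> t (x + x') (y + y')) /\
  (forall f x y, t x y -> t (fop S f x) (fop S f y)).

Definition con_le (t u : rel) : Prop := forall x y, t x y -> u x y.
Definition con_eq (t u : rel) : Prop := con_le t u /\ con_le u t.

Definition con_top : rel := fun _ _ => True.
Definition con_meet (t u : rel) : rel := fun x y => t x y /\ u x y.
Definition con_gen (R : rel) : rel :=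
  fun x y => forall t, is_con t -> con_le R t -> t x y.
Definition con_bigjoin (X : rel -> Prop) : rel :=
  con_gen (fun x y => exists t, X t /\ t x y).
Definition con_join (t u : rel) : rel := con_gen (fun x y => t x y \/ u x y).

Definition con_compact (t : rel) : Prop :=
  forall X : rel -> Prop, (forall u, X u -> is_con u) ->
    con_le t (con_bigjoin X) ->
    exists l : list rel, (forall u, In u l -> X u) /\
                         con_le t (con_bigjoin (fun u => In u l)).

(** eta(theta) = con_SL(0/theta):  x eta(theta) y iff x+i = y+i for some i in 0/theta *)
Definition eta (t : rel) : rel :=
  fun x y => exists i, t i 0 /\ x + i = y + i.

Definition in_eta_image (t : rel) : Prop :=
  exists u, is_con u /\ con_eq t (eta u).

End Con.

(* Main.v *)
Require Import Defs.
From Stdlib Require Import List.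

Section H.
Variable S : SLO.
Local Notation "x + y" := (sjoin S x y).
Local Notation "0" := (szero S).

Lemma jA (x y z : S) : x + (y + z) = (x + y) + z.
Proof. apply sjoinA. Qed.
Lemma jC (x y : S) : x + y = y + x.
Proof. apply sjoinC. Qed.
Lemma jCA (x y z : S) : x + (y + z) = y + (x + z).
Proof. rewrite !jA, (jC x y). reflexivity. Qed.
Lemma j0r (x : S) : x + 0 = x.
Proof. rewrite jC; apply sjoin0. Qed.

Lemma cg_con (R : rel S) : is_con (con_gen R).
Proof.
  unfold con_gen; repeat split.
  - intros x t Ht _; apply (proj1 Ht).
  - intros x y H t Ht HR; apply (proj1 (proj2 Ht)), H; auto.
  - intros x y z H1 H2 t Ht HR; apply (proj1 (proj2 (proj2 Ht))) with y; [apply H1|apply H2]; auto.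
  - intros x y x' y' H1 H2 t Ht HR; apply (proj1 (proj2 (proj2 (proj2 Ht)))); [apply H1|apply H2]; auto.
  - intros f x y H t Ht HR; apply (proj2 (proj2 (proj2 (proj2 Ht)))), H; auto.
Qed.

Lemma cg_incl (R : rel S) : con_le R (con_gen R).
Proof. intros x y H t Ht HR; apply HR, H. Qed.

Lemma cg_least (R t : rel S) : is_con t -> con_le R t -> con_le (con_gen R) t.
Proof. intros Ht HR x y H; apply H; auto. Qed.

Lemma eta_con (x : rel S) : is_con x -> is_con (eta x).
Proof.
  intros Hx; pose proof Hx as (Hr & Hs & Ht & Hj & Hf).
  unfold eta; repeat split.
  - intros a; exists 0; split; auto.
  - intros a b [i [H1 H2]]; exists i; auto.
  - intros a b c [i [H1 H2]] [j [H3 H4]]; exists (i + j); split.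
    + rewrite <- (sjoin0 S 0). apply Hj; auto.
    + rewrite jA, H2, <- jA, (jC i j), jA, H4, <- jA, (jC j i). reflexivity.
  - intros a b a' b' [i [H1 H2]] [j [H3 H4]]; exists (i + j); split.
    + rewrite <- (sjoin0 S 0). apply Hj; auto.
    + rewrite <- !jA, (jCA a' i j), (jCA b' i j), !jA, H2, <- !jA, H4. reflexivity.
  - intros f a b [i [H1 H2]]; exists (fop S f i); split.
    + rewrite <- (fop_zero S f). apply Hf; auto.
    + rewrite <- !fop_join, H2. reflexivity.
Qed.

Lemma con_add (x : rel S) a i : is_con x -> x i 0 -> x (a + i) a.
Proof.
  intros (Hr & Hs & Ht & Hj & Hf) H.
  rewrite <- (j0r a) at 2. apply Hj; auto.
Qed.

Lemma eta_le (x : rel S) : is_con x -> con_le (eta x) x.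
Proof.
  intros Hx a b [i [H1 H2]].
  pose proof Hx as (Hr & Hs & Ht & Hj & Hf).
  apply Ht with (a + i). apply Hs, con_add; auto.
  rewrite H2; apply con_add; auto.
Qed.

Lemma eta_mono (x y : rel S) : con_le y x -> con_le (eta y) (eta x).
Proof. intros H a b [i [H1 H2]]; exists i; auto. Qed.

Lemma eta_zero (x : rel S) i : is_con x -> (eta x i 0 <-> x i 0).
Proof.
  intros Hx; split.
  - apply eta_le; auto.
  - intros H; exists i; split; auto. rewrite sjoinI, sjoin0; reflexivity.
Qed.

Lemma eta_idem (x : rel S) : is_con x -> con_eq (eta (eta x)) (eta x).
Proof.
  intros Hx; split.
  - apply eta_le, eta_con, Hx.
  - intros a b [i [H1 H2]]; exists i; split; auto.
    apply eta_zero; auto.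
Qed.

Definition wapp (w : list (Fidx S)) (p : S) : S :=
  fold_right (fun f q => fop S f q) p w.

Lemma wapp_join w p q : wapp w (p + q) = wapp w p + wapp w q.
Proof. induction w; simpl; auto. rewrite IHw, fop_join; auto. Qed.

Lemma con_wapp (x : rel S) w p q : is_con x -> x p q -> x (wapp w p) (wapp w q).
Proof.
  intros Hx H; induction w; simpl; auto. apply Hx; auto.
Qed.

Lemma wapp_zero w : wapp w 0 = 0.
Proof. induction w; simpl; auto. rewrite IHw, fop_zero; auto. Qed.

Lemma ideal_join (u : rel S) p q : is_con u -> (u (p + q) 0 <-> u p 0 /\ u q 0).
Proof.
  intros Hu; pose proof Hu as (Hr & Hs & Ht & Hj & Hf); split.
  - intros H; split.
    + apply Ht with (p + (p + q)).
      * rewrite <- (j0r p) at 1. apply Hj; auto.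
      * rewrite jA, sjoinI. auto.
    + apply Ht with (q + (p + q)).
      * rewrite <- (j0r q) at 1. apply Hj; auto.
      * rewrite jCA, sjoinI. auto.
  - intros [H1 H2]. rewrite <- (sjoin0 S 0). apply Hj; auto.
Qed.

Lemma I5 (X : rel S -> Prop) (u : rel S) :
     (forall x, X x -> is_con x) -> (exists x, X x) -> is_con u ->
     (forall x, X x -> con_eq (eta x) u) ->
     con_eq (eta (con_bigjoin X)) u.
Proof.
  intros HX [x0 Hx0] Hu Heq.
  assert (HI : forall x p, X x -> (x p 0 <-> u p 0)).
  { intros x p Hx. rewrite <- (eta_zero x p (HX x Hx)).
    destruct (Heq x Hx) as [A B]; split; auto. }
  split.
  - set (tau := fun p q : S => forall w, (u (wapp w p) 0 <-> u (wapp w q) 0)).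
    assert (Htau : is_con tau).
    { unfold tau; split; [|split; [|split; [|split]]].
      - intros; tauto.
      - intros a b H w; rewrite (H w); tauto.
      - intros a b c H1 H2 w; rewrite (H1 w), (H2 w); tauto.
      - intros a b a' b' H1 H2 w. rewrite !wapp_join, !ideal_join by auto.
        rewrite (H1 w), (H2 w); tauto.
      - intros f a b H w. pose proof (H (w ++ f :: nil)%list) as H'.
        unfold wapp in *; rewrite !fold_right_app in H'; simpl in H'; auto. }
    assert (Hle : con_le (con_bigjoin X) tau).
    { apply cg_least; auto. intros a b [x [Hx H]] w.
      rewrite <- !(HI x _ Hx).
      pose proof (con_wapp x w _ _ (HX x Hx) H) as H'.
      destruct (HX x Hx) as (Hr & Hs & Ht & _).
      split; intros; eauto. }
    intros a b [i [H1 H2]].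
    assert (Hi : u i 0).
    { apply (proj2 (Hle _ _ H1 nil)). simpl. apply (proj1 Hu). }
    pose proof Hu as (Hr & Hs & Ht & _).
    apply Ht with (a + i). apply Hs, con_add; auto.
    rewrite H2; apply con_add; auto.
  - intros a b H. destruct (Heq x0 Hx0) as [_ B].
    apply (eta_mono (con_bigjoin X) x0).
    + intros p q Hpq. apply cg_incl. exists x0; auto.
    + apply B; auto.
Qed.

Definition sig_ (e y : rel S) : rel S :=
  fun p q => exists i, e i 0 /\ y (p + i) (q + i).

Lemma join_eta (x y : rel S) : is_con x -> is_con y ->
  con_le (con_join (eta x) y) (sig_ x y).
Proof.
  intros Hx Hy. pose proof Hy as (Hr & Hs & Ht & Hj & Hf).
  pose proof Hx as (Xr & Xs & Xt & Xj & Xf).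
  apply cg_least.
  - unfold sig_; repeat split.
    + intros a; exists 0; auto.
    + intros a b [i [H1 H2]]; exists i; auto.
    + intros a b c [i [H1 H2]] [j [H3 H4]]; exists (i + j); split.
      * rewrite <- (sjoin0 S 0). apply Xj; auto.
      * apply Ht with (b + (i + j)).
        -- rewrite !jA. apply Hj; auto.
        -- rewrite (jC i j), !jA. apply Hj; auto.
    + intros a b a' b' [i [H1 H2]] [j [H3 H4]]; exists (i + j); split.
      * rewrite <- (sjoin0 S 0). apply Xj; auto.
      * rewrite <- !jA, (jCA a' i j), (jCA b' i j), (jA a i (a' + j)), (jA b i (b' + j)). apply Hj; auto.
    + intros f a b [i [H1 H2]]; exists (fop S f i); split.
      * rewrite <- (fop_zero S f). apply Xf; auto.
      * rewrite <- !fop_join. apply Hf; auto.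
  - intros a b [[i [H1 H2]] | H].
    + exists i; split; auto. rewrite H2; apply Hr.
    + exists 0; split; [apply Xr|]. rewrite !j0r; auto.
Qed.

Lemma sig_join (x y : rel S) : is_con x ->
  con_le (sig_ x y) (con_join (eta x) y).
Proof.
  intros Hx a b [i [H1 H2]] t Ht HR.
  pose proof Ht as (Tr & Ts & Tt & _).
  assert (E : forall p, t p (p + i)).
  { intros p. apply HR. left. exists i; split; auto.
    rewrite <- jA, sjoinI; auto. }
  apply Tt with (a + i); [apply E|]. apply Tt with (b + i); [apply HR; right; exact H2 | apply Ts, E].
Qed.

Lemma I6 (x y z : rel S) : is_con x -> is_con y -> is_con z ->
     con_eq (con_join (eta x) (con_meet y z))
            (con_meet (con_join (eta x) y) (con_join (eta x) z)).
Proof.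
  intros Hx Hy Hz. split.
  - intros a b H; split; revert H; apply cg_least; try apply cg_con;
      intros p q [H|[H1 H2]]; apply cg_incl; auto.
  - intros a b [H1 H2].
    apply join_eta in H1; auto. apply join_eta in H2; auto.
    destruct H1 as [i [Hi1 Hi2]]; destruct H2 as [j [Hj1 Hj2]].
    apply sig_join; auto. exists (i + j); split.
    + rewrite <- (sjoin0 S 0). apply Hx; auto.
    + pose proof Hy as (Yr & Ys & Yt & Yj & Yf).
      pose proof Hz as (Zr & Zs & Zt & Zj & Zf).
      split.
      * rewrite !jA. apply Yj; auto.
      * rewrite (jC i j), !jA. apply Zj; auto.
Qed.

Definition pr (i : S) : rel S := fun p q => p = i /\ q = 0.

Lemma bigjoin_fin (X : rel S -> Prop) a b : con_bigjoin X a b ->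
  exists l : list (rel S), (forall u, In u l -> X u) /\
    con_bigjoin (fun u => In u l) a b.
Proof.
  intros H.
  set (rho := fun a b => exists l : list (rel S), (forall u, In u l -> X u) /\
    con_bigjoin (fun u => In u l) a b).
  assert (Hmono : forall l l' : list (rel S), (forall u, In u l -> In u l') ->
     con_le (con_bigjoin (fun u => In u l)) (con_bigjoin (fun u => In u l'))).
  { intros l l' Hl. apply cg_least. apply cg_con.
    intros p q [t [Ht Hpq]]. apply cg_incl. exists t; auto. }
  assert (Cr := fun R => proj1 (cg_con R)).
  assert (Cs := fun R => proj1 (proj2 (cg_con R))).
  assert (Ct := fun R => proj1 (proj2 (proj2 (cg_con R)))).
  assert (Cj := fun R => proj1 (proj2 (proj2 (proj2 (cg_con R))))).
  assert (Cf := fun R => proj2 (proj2 (proj2 (proj2 (cg_con R))))).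
  assert (Hr : is_con rho).
  { unfold rho; split; [|split; [|split; [|split]]].
    - intros p; exists nil; split; [simpl; tauto|]. apply Cr.
    - intros p q [l [Hl H1]]; exists l; split; auto. apply Cs; auto.
    - intros p q r [l [Hl H1]] [l' [Hl' H2]]; exists (l ++ l')%list; split.
      + intros u Hu; apply in_app_or in Hu; destruct Hu; auto.
      + eapply Ct.
        * apply (Hmono l); [intros; apply in_or_app; auto|]; eauto.
        * apply (Hmono l'); [intros; apply in_or_app; auto|]; eauto.
    - intros p q p' q' [l [Hl H1]] [l' [Hl' H2]]; exists (l ++ l')%list; split.
      + intros u Hu; apply in_app_or in Hu; destruct Hu; auto.
      + apply Cj.
        * apply (Hmono l); [intros; apply in_or_app; auto|]; eauto.
        * apply (Hmono l'); [intros; apply in_or_app; auto|]; eauto.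
    - intros f p q [l [Hl H1]]; exists l; split; auto. apply Cf; auto. }
  assert (Hle : con_le (con_bigjoin X) rho).
  { apply cg_least; auto.
    intros p q [t [Ht Hpq]]. exists (t :: nil); split.
    - simpl; intros u [<-|[]]; auto.
    - apply cg_incl. exists t; simpl; auto. }
  exact (Hle _ _ H).
Qed.

Lemma pr_compact (r : rel S) i : con_eq r (con_gen (pr i)) -> con_compact r.
Proof.
  intros [A B] X HX Hle.
  assert (H : con_bigjoin X i 0).
  { apply Hle, B, cg_incl. split; auto. }
  destruct (bigjoin_fin X _ _ H) as [l [Hl H']].
  exists l; split; auto.
  intros p q Hpq. apply A in Hpq. revert Hpq. apply cg_least. apply cg_con.
  intros a b [-> ->]; auto.
Qed.

Lemma pr_eta i : con_eq (eta (con_gen (pr i))) (con_gen (pr i)).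
Proof.
  split. apply eta_le, cg_con.
  apply cg_least. apply eta_con, cg_con.
  intros a b [-> ->]. exists i; split.
  - apply cg_incl; split; auto.
  - rewrite sjoinI, sjoin0; auto.
Qed.

Lemma I7 (t : rel S) : is_con t ->
     (in_eta_image t <->
      exists Y : rel S -> Prop,
        (forall r, Y r -> is_con r /\ con_compact r /\ in_eta_image r) /\
        con_eq t (con_bigjoin Y)).
Proof.
  intros Ht; split.
  - intros [u [Hu [A B]]].
    exists (fun r => exists i, u i 0 /\ is_con r /\ con_eq r (con_gen (pr i))).
    split.
    + intros r [i [Hi [Hr E]]]; split; auto; split.
      * eapply pr_compact; eauto.
      * exists (con_gen (pr i)); split. apply cg_con.
        destruct E as [E1 E2]; destruct (pr_eta i) as [P1 P2].
        split; intros a b H; auto.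
    + split.
      * intros a b H. apply A in H. destruct H as [i [Hi H]].
        pose proof (cg_con (fun x y => exists t0,
          (exists i0, u i0 0 /\ is_con t0 /\ con_eq t0 (con_gen (pr i0))) /\ t0 x y))
          as (Cr & Cs & Ct & Cj & Cf).
        assert (Hi' : con_bigjoin (fun r => exists i, u i 0 /\ is_con r /\ con_eq r (con_gen (pr i))) i 0).
        { apply cg_incl. exists (con_gen (pr i)). split.
          - exists i; split; auto; split. apply cg_con. split; intros p q; auto.
          - apply cg_incl; split; auto. }
        apply Ct with (a + i). apply Cs. rewrite <- (j0r a) at 2. apply Cj; auto.
        rewrite H. rewrite <- (j0r b) at 2. apply Cj; auto.
      * apply cg_least; auto. intros a b [r [[i [Hi [Hr [E1 E2]]]] H]].
        apply E1 in H. revert H. apply cg_least; auto.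
        intros p q [-> ->]. apply B. apply eta_zero; auto.
  - intros [Y [HY [A B]]]. exists t; split; auto. split.
    2: apply eta_le; auto.
    intros a b H. apply A in H. revert H. apply cg_least. apply eta_con; auto.
    intros p q [r [Hr H]].
    destruct (HY r Hr) as [Hrc [_ [u [Hu [E1 E2]]]]].
    assert (Hrt : con_le r t).
    { intros c d Hcd. apply B, cg_incl. exists r; auto. }
    apply (eta_mono t r Hrt).
    apply (eta_mono r (eta u) E2).
    apply eta_idem; auto.
Qed.

End H.

Theorem theorem5p5 (S : SLO) :
  (* eta is a map Con S -> Con S *)
  (forall x : rel S, is_con x -> is_con (eta x)) /\
  (* (I1) *)
  (forall x : rel S, is_con x -> con_le (eta x) x) /\
  (* (I2) *)
  (forall x y : rel S, is_con x -> is_con y -> con_le y x ->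
     con_le (eta y) (eta x)) /\
  (* (I3) *)
  (forall x : rel S, is_con x -> con_eq (eta (eta x)) (eta x)) /\
  (* (I4) *)
  con_eq (eta (con_top S)) (con_top S) /\
  (* (I5) *)
  (forall (X : rel S -> Prop) (u : rel S),
     (forall x, X x -> is_con x) -> (exists x, X x) -> is_con u ->
     (forall x, X x -> con_eq (eta x) u) ->
     con_eq (eta (con_bigjoin X)) u) /\
  (* (I6) *)
  (forall x y z : rel S, is_con x -> is_con y -> is_con z ->
     con_eq (con_join (eta x) (con_meet y z))
            (con_meet (con_join (eta x) y) (con_join (eta x) z))) /\
  (* (I7) eta(L) = set of all joins of subsets of eta(L) ∩ L_c *)
  (forall t : rel S, is_con t ->
     (in_eta_image t <->
      exists Y : rel S -> Prop,
        (forall r, Y r -> is_con r /\ con_compact r /\ in_eta_image r) /\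
        con_eq t (con_bigjoin Y))).
Proof.
  split. apply eta_con.
  split. apply eta_le.
  split. intros; apply eta_mono; auto.
  split. apply eta_idem.
  split. split. intros a b _; exact I.
  intros a b _. exists (sjoin S a b). split. exact I.
  rewrite jA, sjoinI, (jC S a b), jA, sjoinI. reflexivity.
  split. apply I5.
  split. apply I6.
  apply I7.
Qed.
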